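(* Let $X$ be a Banach space and $M,N:\Sigma\to cb(X)$ two consistent $d_H$-multimeasures. If there is a non-negative bounded measurable function $\theta:\Omega\to\mathbb R$ such that $j\circ M(E)=(BDS)\int_E\theta\,d(j\circ N)$ for every $E\in\Sigma$, then $\theta$ is $BDS_m$-integrable with respect to $N$ and $M(E)=\int_E\theta\,dN$ for every $E\in\Sigma$.
   Context: $(\Omega,\Sigma)$ is a measurable space, $X$ a Banach space with dual unit ball $B_{X'}$. $cb(X)$: nonempty closed bounded convex subsets of $X$ with Hausdorff metric $d_H$; $s(x',C)=\sup\{\langle x',x\rangle:x\in C\}$. A $d_H$-multimeasure is $M:\Sigma\to cb(X)$ countably additive in $d_H$. $-N$: $E\mapsto\{-x:x\in N(E)\}$. $\mathcal N(M)=\{E:M(E)=\{0\}\}$; $M,N$ are consistent if there is $H\in\Sigma$ such that both are pointless on $H$ (no $E\subseteq H$, $E\in\Sigma\setminus\mathcal N$, on which the restriction is of the form $F\mapsto\{\kappa(F)\}$ with $\kappa$ a countably additive vector measure) and both are of that vector form on $\Omega\setminus H$. Rådström embedding: $j(A)=s(\cdot,A)|_{B_{X'}}\in\ell_\infty(B_{X'})$. For a vector measure $n:\Sigma\to Y$, $(BDS)\int_Ef\,dn$ is the element $\nu(E)\in Y$ with $\langle y',\nu(E)\rangle=\int_Ef\,d\langle y',n\rangle$ for all $y'\in Y'$. $BDS_m$-integral: measurable $f$ is $BDS_m$-integrable w.r.t. $N$ if for all $E,x'$ the expression $\int_Ef^+ds(x',N)+\int_Ef^-ds(x',-N)$ makes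 sense and for each $E$ there is a nonempty closed convex $M_f(E)$ with $s(x',M_f(E))$ equal to it for all $x'\in X'$; $\int_Ef\,dN:=M_f(E)$. *)

(* Defs.v *)
From HB Require Import structures.
From mathcomp Require Import all_boot all_order all_algebra.
From mathcomp Require Import all_classical all_reals all_analysis.
Set Implicit Arguments. Unset Strict Implicit. Unset Printing Implicit Defensive.
Import Order.TTheory GRing.Theory Num.Theory.
Import numFieldNormedType.Exports.
Local Open Scope classical_set_scope.
Local Open Scope ring_scope.

Section Defs.
Context {R : realType}.

Section Banach.
Variable X : normedModType R.

Definition is_dual (x' : X -> R) : Prop :=
  (forall (a : R) (u v : X), x' (a *: u + v) = a * x' u + x' v) /\ continuous x'.

Definition dual_ball : set (X -> R) :=
  [set x' | (forall (a : R) (u v : X), x' (a *: u + v) = a * x' u + x' v) /\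
            (forall u, `|x' u| <= `|u|)].

Definition convex_set_ (C : set X) : Prop :=
  forall x y (t : R), C x -> C y -> 0 <= t <= 1 -> C (t *: x + (1 - t) *: y).

Definition cbX (C : set X) : Prop :=
  C !=set0 /\ closed C /\ bounded_set C /\ convex_set_ C.

Definition supp (x' : X -> R) (C : set X) : \bar R :=
  ereal_sup [set (x' x)%:E | x in C].

Definition dist_pt (x : X) (B : set X) : \bar R :=
  ereal_inf [set (`|x - b|)%:E | b in B].
Definition dH (A B : set X) : \bar R :=
  maxe (ereal_sup [set dist_pt a B | a in A]) (ereal_sup [set dist_pt b A | b in B]).

Definition msum (A B : set X) : set X := closure [set a + b | a in A & b in B].
Fixpoint msum_n (f : nat -> set X) (n : nat) : set X :=
  match n with 0%N => [set 0] | m.+1 => msum (msum_n f m) (f m) end.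

Definition oppM {T : Type} (N : set T -> set X) : set T -> set X :=
  fun E => [set - x | x in N E].
End Banach.

Section Meas.
Context {d : measure_display} {T : measurableType d}.

Definition dH_multimeasure {X : normedModType R} (M : set T -> set X) : Prop :=
  (forall E, measurable E -> cbX (M E)) /\
  (forall F : nat -> set T, (forall n, measurable (F n)) -> trivIset setT F ->
     forall e : R, 0 < e ->
       \forall n \near \oo, (dH (msum_n (fun k => M (F k)) n) (M (\bigcup_k F k)) <= e%:E)%E).

Definition vector_measure {X : normedModType R} (k : set T -> X) : Prop :=
  forall F : nat -> set T, (forall n, measurable (F n)) -> trivIset setT F ->
    (fun n => \sum_(i < n) k (F i)) @ \oo --> k (\bigcup_i F i).

Definition vector_on {X : normedModType R} (M : set T -> set X) (E : set T) : Prop :=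
  exists k : set T -> X, vector_measure k /\
    forall F, measurable F -> F `<=` E -> M F = [set k F].

Definition pointless {X : normedModType R} (M : set T -> set X) (H : set T) : Prop :=
  ~ exists E, [/\ measurable E, E `<=` H, M E <> [set 0] & vector_on M E].

Definition consistent {X : normedModType R} (M N : set T -> set X) : Prop :=
  exists H, [/\ measurable H, pointless M H, pointless N H,
               vector_on M (~` H) & vector_on N (~` H)].

Definition scalar_int (nu : set T -> R) (f : T -> R) (E : set T) (r : R) : Prop :=
  exists mu1 mu2 : {finite_measure set T -> \bar R},
    [/\ forall A, measurable A -> nu A = fine (mu1 A) - fine (mu2 A),
        mu1.-integrable E (EFin \o f), mu2.-integrable E (EFin \o f) &
        r = fine (\int[mu1]_(x in E) (f x)%:E) - fine (\int[mu2]_(x in E) (f x)%:E)].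

(* Radstrom embedding j(A) = s(.,A) restricted to B_{X'} *)
Definition radstrom {X : normedModType R} (A : set X) : (X -> R) -> R :=
  fun x' => fine (supp x' A).

(* elements of the dual of l_infty(B_{X'}): functionals on (X -> R) -> R,
   linear and bounded with respect to the sup norm over B_{X'} on the
   bounded functions *)
Definition linfty_bounded {X : normedModType R} (g : (X -> R) -> R) : Prop :=
  exists C : R, forall x', dual_ball x' -> `|g x'| <= C.
Definition linfty_dual {X : normedModType R} (phi : ((X -> R) -> R) -> R) : Prop :=
  (forall (a : R) g h, linfty_bounded g -> linfty_bounded h ->
      phi (fun x' => a * g x' + h x') = a * phi g + phi h) /\
  exists C : R, forall g (c : R), linfty_bounded g ->
      (forall x', dual_ball x' -> `|g x'| <= c) -> `|phi g| <= C * c.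

Definition BDS_integral_is {X : normedModType R}
  (n : set T -> ((X -> R) -> R)) (f : T -> R) (E : set T) (y : (X -> R) -> R) : Prop :=
  forall phi, linfty_dual phi -> scalar_int (fun A => phi (n A)) f E (phi y).

Definition BDSm_integral {X : normedModType R} (N : set T -> set X)
  (f : T -> R) (Mf : set T -> set X) : Prop :=
  measurable_fun setT f /\
  forall E, measurable E ->
    [/\ Mf E !=set0, closed (Mf E), convex_set_ (Mf E) &
     forall x', is_dual x' -> exists r1 r2,
       [/\ scalar_int (fun A => fine (supp x' (N A))) (fun t => Num.max (f t) 0) E r1,
           scalar_int (fun A => fine (supp x' (oppM N A))) (fun t => Num.max (- f t) 0) E r2 &
           supp x' (Mf E) = (r1 + r2)%:E]].

Definition BDSm_integrable {X : normedModType R} (N : set T -> set X) (f : T -> R) :=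
  exists Mf, BDSm_integral N f Mf.
End Meas.
End Defs.

(* Main.v *)
Require Import Defs.
From HB Require Import structures.
From mathcomp Require Import all_boot all_order all_algebra.
From mathcomp Require Import all_classical all_reals all_analysis.
From mathcomp Require Import measurable_realfun.
From mathcomp Require Import ring lra.
Import Order.TTheory GRing.Theory Num.Theory.
Import numFieldNormedType.Exports.
Local Open Scope classical_set_scope.
Local Open Scope ring_scope.
Set Implicit Arguments. Unset Strict Implicit. Unset Printing Implicit Defensive.


Section HahnBanach.
Variables (R : realType) (V : lmodType R) (p : V -> R).
Hypothesis pD : forall x y, p (x + y) <= p x + p y.
Hypothesis pZ : forall (t : R) x, 0 < t -> p (t *: x) = t * p x.

Definition subsp (S : set V) := S 0 /\ forall (a : R) x y, S x -> S y -> S (a *: x + y).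
Definition linon (S : set V) (g : V -> R) :=
  forall (a : R) x y, S x -> S y -> g (a *: x + y) = a * g x + g y.

Lemma subspZ S a x : subsp S -> S x -> S (a *: x).
Proof. by move=> [S0 SS] Sx; rewrite -[_ *: _]addr0; apply: SS. Qed.
Lemma subspD S x y : subsp S -> S x -> S y -> S (x + y).
Proof. by move=> [S0 SS] Sx Sy; rewrite -[x]scale1r; apply: SS. Qed.
Lemma subspN S x : subsp S -> S x -> S (- x).
Proof. by move=> hS Sx; rewrite -scaleN1r; apply: subspZ. Qed.
Lemma subspB S x y : subsp S -> S x -> S y -> S (x - y).
Proof. by move=> hS Sx Sy; apply: subspD => //; apply: subspN. Qed.

Lemma linon0 S g : subsp S -> linon S g -> g 0 = 0.
Proof.
move=> [S0 _] hg; have := hg 1 0 0 S0 S0; rewrite scaler0 addr0 mul1r.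
lra.
Qed.
Lemma linonZ S g a x : subsp S -> linon S g -> S x -> g (a *: x) = a * g x.
Proof.
move=> hS hg Sx; have := hg a x 0 Sx (proj1 hS); rewrite addr0 => ->.
by rewrite (linon0 hS hg) addr0.
Qed.
Lemma linonD S g x y : subsp S -> linon S g -> S x -> S y -> g (x + y) = g x + g y.
Proof. by move=> hS hg Sx Sy; have := hg 1 x y Sx Sy; rewrite scale1r mul1r. Qed.

Lemma p0 : p 0 = 0.
Proof.
have := pZ 0 (ltr0n R 2); rewrite scaler0 => h.
lra.
Qed.

Definition ext_sp (S : set V) z := [set w | exists t : R, S (w - t *: z)].
Definition ext_fn (S : set V) (g : V -> R) z (c : R) (w : V) : R :=
  match pselect (exists t : R, S (w - t *: z)) with
  | left H => let t := sval (cid H) in g (w - t *: z) + t * c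
  | right _ => 0 end.

Lemma ext_uniq S z x t t' : subsp S -> ~ S z -> S x -> S (x + t *: z - t' *: z) -> t' = t.
Proof.
move=> hS nSz Sx Sxt; have [//|ntt] := eqVneq t' t; exfalso; apply: nSz.
have : S ((t - t') *: z).
  have -> : (t - t') *: z = x + t *: z - t' *: z - x.
    by rewrite scalerBl [x + _]addrC addrAC addrK.
  exact: subspB.
move=> /(subspZ (t - t')^-1 hS); rewrite scalerA mulVf ?scale1r //.
by rewrite subr_eq0 eq_sym.
Qed.

Lemma ext_fnE S g z c x t : subsp S -> ~ S z -> S x ->
  ext_fn S g z c (x + t *: z) = g x + t * c.
Proof.
move=> hS nSz Sx; rewrite /ext_fn; case: pselect => [H|]; last first.
  by case; exists t; rewrite addrK.
case: (cid H) => t' /= St'.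
by have -> := ext_uniq hS nSz Sx St'; rewrite addrK.
Qed.

Lemma ext_spP S z w : ext_sp S z w -> exists x t, S x /\ w = x + t *: z.
Proof. by case=> t St; exists (w - t *: z), t; split => //; rewrite subrK. Qed.

Lemma ext_spE S z x t : S x -> ext_sp S z (x + t *: z).
Proof. by move=> Sx; exists t; rewrite addrK. Qed.

Lemma lin_comb (a t1 t2 : R) (x1 x2 z : V) :
  a *: (x1 + t1 *: z) + (x2 + t2 *: z) = (a *: x1 + x2) + (a * t1 + t2) *: z.
Proof. by rewrite scalerDr scalerA addrACA scalerDl. Qed.

Lemma ext_good S g z c : subsp S -> linon S g -> (forall x, S x -> g x <= p x) ->
  ~ S z -> (forall x, S x -> g x - p (x - z) <= c) ->
  (forall y, S y -> c <= p (y + z) - g y) ->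
  [/\ subsp (ext_sp S z), linon (ext_sp S z) (ext_fn S g z c),
      (forall w, ext_sp S z w -> ext_fn S g z c w <= p w),
      (forall x, S x -> ext_sp S z x /\ ext_fn S g z c x = g x) &
      ext_sp S z z /\ ext_fn S g z c z = c].
Proof.
move=> hS hg gp nSz cl cu; split.
- split; first by exists 0; rewrite scale0r subr0; exact: (proj1 hS).
  move=> a w1 w2 /ext_spP[x1 [t1 [Sx1 ->]]] /ext_spP[x2 [t2 [Sx2 ->]]].
  rewrite lin_comb; apply: ext_spE; exact: (proj2 hS).
- move=> a w1 w2 /ext_spP[x1 [t1 [Sx1 ->]]] /ext_spP[x2 [t2 [Sx2 ->]]].
  rewrite lin_comb !ext_fnE //; last exact: (proj2 hS).
  by rewrite hg //; ring.
- move=> w /ext_spP[x [t [Sx ->]]]; rewrite ext_fnE //.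
  case: (ltgtP 0 t) => [t0|t0|<-].
  + have := cu _ (subspZ t^-1 hS Sx).
    rewrite (linonZ _ hS hg Sx) => h.
    have -> : x + t *: z = t *: (t^-1 *: x + z).
      by rewrite scalerDr scalerA mulfV ?gt_eqF // scale1r.
    rewrite pZ //.
    have : t * c <= t * (p (t^-1 *: x + z) - t^-1 * g x) by rewrite ler_pM2l.
    rewrite mulrBr mulrA mulfV ?gt_eqF // mul1r. lra.
  + have s0 : 0 < - t by rewrite oppr_gt0.
    have := cl _ (subspZ (- t)^-1 hS Sx).
    rewrite (linonZ _ hS hg Sx) => h.
    have -> : x + t *: z = (- t) *: ((- t)^-1 *: x - z).
      by rewrite scalerBr scalerA mulfV ?gt_eqF // scale1r scaleNr opprK.
    rewrite pZ //.
    have : (- t) * ((- t)^-1 * g x - p ((- t)^-1 *: x - z)) <= (- t) * c by rewrite ler_pM2l.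
    rewrite mulrBr mulrA mulfV ?gt_eqF // mul1r. lra.
  + by rewrite scale0r addr0 mul0r addr0; exact: gp.
- move=> x Sx; have e : x = x + 0 *: z by rewrite scale0r addr0.
  split; first by rewrite e; exact: ext_spE.
  by rewrite e ext_fnE // mul0r addr0 scale0r addr0.
- have e : z = 0 + 1 *: z by rewrite scale1r add0r.
  split; first by rewrite {2}e; apply: ext_spE; exact: (proj1 hS).
  by rewrite {2}e ext_fnE ?(linon0 hS hg) ?mul1r ?add0r //; exact: (proj1 hS).
Qed.

Section Zorn_part.
Variable z : V.
Hypothesis z0 : z != 0.

Definition good (q : set V * (V -> R)) :=
  [/\ subsp q.1, linon q.1 q.2, (forall x, q.1 x -> q.2 x <= p x), q.1 z & q.2 z = p z].
Definition leq_q (q1 q2 : set V * (V -> R)) :=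
  q1.1 `<=` q2.1 /\ forall x, q1.1 x -> q1.2 x = q2.2 x.

Definition q0 : set V * (V -> R) := (ext_sp [set 0] z, ext_fn [set 0] (fun _ => 0) z (p z)).

Lemma subsp0 : subsp [set 0].
Proof. by split => // a x y -> ->; rewrite scaler0 addr0. Qed.

Lemma good_q0 : good q0.
Proof.
have [] := @ext_good [set 0] (fun _ => 0) z (p z) subsp0.
- by move=> a x y _ _; rewrite mulr0 addr0.
- by move=> x ->; rewrite p0.
- by move=> /= /eqP; rewrite (negbTE z0).
- move=> x -> /=; rewrite !add0r; have := pD z (- z); rewrite subrr p0. lra.
- by move=> y -> /=; rewrite add0r subr0.
by move=> h1 h2 h3 _ [h4 h5]; split.
Qed.

Lemma q0_le q : good q -> leq_q q0 q.
Proof.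
case=> hS hg gp Sz gz; split.
  move=> x /= [t /= /subr0_eq ->]; exact: subspZ.
move=> x /= [t /= /subr0_eq ->].
rewrite -[t *: z]add0r (ext_fnE _ _ _ subsp0) //; last by move=> /= /eqP; rewrite (negbTE z0).
by rewrite !add0r (linonZ _ hS hg Sz) gz.
Qed.

Lemma leq_q_trans a b c : leq_q a b -> leq_q b c -> leq_q a c.
Proof.
move=> [ab gab] [bc gbc]; split; first exact: subset_trans bc.
by move=> x ax; rewrite gab // gbc //; exact: ab.
Qed.

Definition Tq := {q : set V * (V -> R) | good q}.
Definition relq (a b : Tq) : bool := `[< leq_q (sval a) (sval b) >].
Definition t0 : Tq := exist _ q0 good_q0.

Lemma chain_ub (A : set Tq) : total_on A relq -> exists t, forall s, A s -> relq s t.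
Proof.
move=> Atot.
pose A' := fun q : Tq => A q \/ q = t0.
have le0 : forall q : Tq, leq_q q0 (sval q) by move=> [q gq]; exact: q0_le.
have tot' : forall q1 q2, A' q1 -> A' q2 -> leq_q (sval q1) (sval q2) \/ leq_q (sval q2) (sval q1).
  move=> q1 q2 [A1|->] [A2|->].
  - by have [/asboolP|/asboolP] := Atot _ _ A1 A2; [left|right].
  - by right; exact: le0.
  - by left; exact: le0.
  - by left; exact: le0.
have agree : forall q1 q2 x, A' q1 -> A' q2 -> (sval q1).1 x -> (sval q2).1 x ->
    (sval q1).2 x = (sval q2).2 x.
  move=> q1 q2 x A1 A2 x1 x2; have [[_ h]|[_ h]] := tot' _ _ A1 A2; first exact: h.
  by rewrite h.
pose dom := fun x => exists q, A' q /\ (sval q).1 x.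
pose gu := fun x => match pselect (dom x) with
  | left H => (sval (sval (cid H))).2 x | right _ => 0 end.
have guE : forall q x, A' q -> (sval q).1 x -> gu x = (sval q).2 x.
  move=> q x Aq qx; rewrite /gu; case: pselect => [H|[]]; last by exists q.
  by case: (cid H) => q' [Aq' q'x] /=; apply: agree.
have common : forall q1 q2, A' q1 -> A' q2 -> exists q, [/\ A' q, (sval q1).1 `<=` (sval q).1 &
    (sval q2).1 `<=` (sval q).1].
  move=> q1 q2 A1 A2; have [[h _]|[h _]] := tot' _ _ A1 A2.
    by exists q2; split.
  by exists q1; split.
have gdom : good (dom, gu).
  split => /=.
  - split; first by exists t0; split; [right|case: good_q0 => [[]]].
    move=> a x y [q1 [A1 x1]] [q2 [A2 y2]]; have [q [Aq s1 s2]] := common _ _ A1 A2.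
    exists q; split => //; have [hS _ _ _ _] := svalP q; apply: (proj2 hS); [exact: s1|exact: s2].
  - move=> a x y [q1 [A1 x1]] [q2 [A2 y2]]; have [q [Aq s1 s2]] := common _ _ A1 A2.
    have [hS hg _ _ _] := svalP q.
    rewrite (guE q) //; last by apply: (proj2 hS); [exact: s1|exact: s2].
    by rewrite (guE q x) ?(guE q y) //; [apply: hg; [exact: s1|exact: s2]|exact: s2|exact: s1].
  - move=> x [q [Aq qx]]; rewrite (guE q) //; have [_ _ gp _ _] := svalP q; exact: gp.
  - by exists t0; split; [right|case: good_q0].
  - by rewrite (guE t0); [case: good_q0|right|case: good_q0].
exists (exist _ _ gdom) => s As; apply/asboolP; split => /=.
  by move=> x sx; exists s; split => //; left.
by move=> x sx; rewrite (guE s) //; left.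
Qed.

Lemma HB_exists : exists F : V -> R, [/\ linon setT F, (forall x, F x <= p x) & F z = p z].
Proof.
have [] := @ZL_preorder Tq t0 relq.
- by move=> t; apply/asboolP; split.
- by move=> a b c /asboolP h1 /asboolP h2; apply/asboolP; exact: leq_q_trans h2.
- exact: chain_ub.
move=> [[S g] [hS hg gp Sz gz]] /= mmax.
have ST : forall w, S w.
  move=> w; apply: contrapT => nSw.
  pose E := [set g x - p (x - w) | x in S].
  have Eub : forall y, S y -> ubound E (p (y + w) - g y).
    move=> y Sy _ [x Sx <-]; have := pD (x - w) (y + w).
    rewrite addrACA addNr addr0 => h.
    have gD := linonD hS hg Sx Sy; simpl in gD; have := gp _ (subspD hS Sx Sy); rewrite /= gD. lra.
  have En : E !=set0 by exists (g 0 - p (0 - w)); exists 0 => //; exact: (proj1 hS).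
  pose c := sup E.
  have [] := @ext_good S g w c hS hg gp nSw.
  - move=> x Sx; apply: ub_le_sup; last by exists x.
    by exists (p (0 + w) - g 0); apply: Eub; exact: (proj1 hS).
  - by move=> y Sy; apply: ge_sup => //; exact: Eub.
  move=> h1 h2 h3 h4 [h5 _].
  have gq : good (ext_sp S w, ext_fn S g w c).
    split => //=; first by have [] := h4 z Sz.
    by have [_ ->] := h4 z Sz; exact: gz.
  have := mmax (exist _ _ gq); rewrite /relq /=.
  have le1 : leq_q (S, g) (ext_sp S w, ext_fn S g w c).
    by split => /= x Sx; have [] := h4 x Sx.
  move=> /(_ (asboolT le1)) /asboolP [/= sub _]; exact: nSw (sub _ h5).
exists g; split => //; first by move=> a x y _ _; apply: (hg a x y); apply: ST.
by move=> x; apply: (gp x); apply: ST.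
Qed.
End Zorn_part.
End HahnBanach.

Section Separation.
Variables (R : realType) (X : normedModType R).

Lemma closed_far (B : set X) a : closed B -> ~ B a ->
  exists2 e : R, 0 < e & forall b, B b -> e <= `|b - a|.
Proof.
move=> cB nBa.
have /nbhs_ballP[e e0 eB] : nbhs a (~` B).
  by apply: open_nbhs_nbhs; split => //; exact: closed_openC.
exists e => // b Bb; rewrite leNgt; apply/negP => lt; apply: (eB b) Bb.
by rewrite -ball_normE /ball_ /= distrC.
Qed.

Definition Cset (D : set X) := [set c | exists l w, [/\ 0 <= l, D w & c = l *: w]].
Definition gaugeC (C : set X) (x : X) := inf [set `|x - c| | c in C].

Section gauge.
Variable C : set X.
Hypothesis C0 : C 0.
Hypothesis CD : forall c1 c2, C c1 -> C c2 -> C (c1 + c2).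
Hypothesis CZ : forall t c, 0 <= t -> C c -> C (t *: c).

Lemma gauge_ne x : [set `|x - c| | c in C] !=set0.
Proof. by exists `|x - 0|, 0. Qed.
Lemma gauge_lb x : has_lbound [set `|x - c| | c in C].
Proof. by exists 0 => _ [c _ <-]. Qed.
Lemma gauge_le x c : C c -> gaugeC C x <= `|x - c|.
Proof. by move=> Cc; apply: ge_inf; [exact: gauge_lb| exists c]. Qed.
Lemma gauge_ge0 x : 0 <= gaugeC C x.
Proof. by apply: lb_le_inf; [exact: gauge_ne| move=> _ [c _ <-]]. Qed.

Lemma gaugeD x y : gaugeC C (x + y) <= gaugeC C x + gaugeC C y.
Proof.
have H1 : forall c1, C c1 -> gaugeC C (x + y) - `|x - c1| <= gaugeC C y.
  move=> c1 Cc1; apply: lb_le_inf; first exact: gauge_ne.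
  move=> _ [c2 Cc2 <-].
  have := gauge_le (x + y) (CD Cc1 Cc2).
  have -> : x + y - (c1 + c2) = (x - c1) + (y - c2).
    by rewrite opprD addrACA.
  move=> h; have := ler_normD (x - c1) (y - c2). lra.
have : gaugeC C (x + y) - gaugeC C y <= gaugeC C x.
  apply: lb_le_inf; first exact: gauge_ne.
  move=> _ [c1 Cc1 <-]; have := H1 c1 Cc1. lra.
lra.
Qed.

Lemma gaugeZle t x : 0 < t -> gaugeC C (t *: x) <= t * gaugeC C x.
Proof.
move=> t0.
have : gaugeC C (t *: x) / t <= gaugeC C x.
  apply: lb_le_inf; first exact: gauge_ne.
  move=> _ [c Cc <-]; rewrite ler_pdivrMr //.
  have := gauge_le (t *: x) (CZ (ltW t0) Cc).
  by rewrite -scalerBr normrZ gtr0_norm // mulrC.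
by rewrite ler_pdivrMr // mulrC.
Qed.

Lemma gaugeZ t x : 0 < t -> gaugeC C (t *: x) = t * gaugeC C x.
Proof.
move=> t0; apply/eqP; rewrite eq_le gaugeZle //=.
have ti : 0 < t^-1 by rewrite invr_gt0.
have := gaugeZle (t *: x) ti.
rewrite scalerA mulVf ?gt_eqF // scale1r => h.
by rewrite -ler_pdivlMl // mulrC.
Qed.
End gauge.

Lemma convex_comb (t : R) (x1 x2 y1 y2 : X) :
  t *: (x1 + y1) + (1 - t) *: (x2 + y2) = (t *: x1 + (1 - t) *: x2) + (t *: y1 + (1 - t) *: y2).
Proof. by rewrite !scalerDr addrACA. Qed.

Lemma convex_combB (t : R) (b1 b2 a : X) :
  t *: (b1 - a) + (1 - t) *: (b2 - a) = (t *: b1 + (1 - t) *: b2) - a.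
Proof. by rewrite !scalerBr addrACA -opprD -scalerDl subrKC scale1r. Qed.

Lemma convex_norm (t r : R) (u1 u2 : X) : 0 <= t <= 1 -> `|u1| <= r -> `|u2| <= r ->
  `|t *: u1 + (1 - t) *: u2| <= r.
Proof.
move=> /andP[t0 t1] h1 h2; apply: (le_trans (ler_normD _ _)).
rewrite !normrZ (ger0_norm t0) ger0_norm ?subr_ge0 //.
have : t * `|u1| <= t * r by rewrite ler_wpM2l.
have : (1 - t) * `|u2| <= (1 - t) * r by rewrite ler_wpM2l // subr_ge0.
lra.
Qed.

Lemma is_dual_lin (F : X -> R) : linon setT F -> (forall x, `|F x| <= `|x|) -> is_dual F.
Proof.
move=> hF hb; split; first by move=> a u v; apply: hF.
have FB : forall x y, F x - F y = F (x - y).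
  move=> x y; have := hF (-1) y x I I; rewrite scaleN1r mulN1r addrC => ->.
  by rewrite addrC.
move=> x; apply/cvgrPdist_le => /= eps eps0.
apply/nbhs_ballP; exists eps => // y; rewrite -ball_normE /ball_ /= => h.
by rewrite FB; apply: (le_trans (hb _)); exact: ltW.
Qed.

Lemma separation (B : set X) a : closed B -> convex_set_ B -> B !=set0 -> ~ B a ->
  exists x' : X -> R, is_dual x' /\ exists2 del : R, 0 < del & forall b, B b -> x' b <= x' a - del.
Proof.
move=> cB convB [b0 Bb0] nBa.
have [e e0 eB] := closed_far cB nBa.
pose r := e / 2.
have r0 : 0 < r by rewrite divr_gt0.
pose D := [set w | exists b u, [/\ B b, `|u| <= r & w = b - a + u]].
have Db0 : D (b0 - a) by exists b0, 0; split => //; [rewrite normr0; exact: ltW|rewrite addr0].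
have Dconv : forall t w1 w2, 0 <= t <= 1 -> D w1 -> D w2 -> D (t *: w1 + (1 - t) *: w2).
  move=> t w1 w2 t01 [b1 [u1 [Bb1 u1r ->]]] [b2 [u2 [Bb2 u2r ->]]].
  rewrite convex_comb convex_combB.
  exists (t *: b1 + (1 - t) *: b2), (t *: u1 + (1 - t) *: u2); split => //.
    exact: convB.
  exact: convex_norm.
have Dnorm : forall w, D w -> r <= `|w|.
  move=> w [b [u [Bb ur ->]]]; have := lerB_dist (b - a) (- u).
  rewrite opprK normrN => h; have := eB b Bb.
  have : r = e - r by rewrite /r; field.
  lra.
pose C := [set c | exists l w, [/\ 0 <= l, D w & c = l *: w]].
have C0 : C 0 by exists 0, (b0 - a); split => //; rewrite scale0r.
have CZ : forall t c, 0 <= t -> C c -> C (t *: c).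
  move=> t c t0 [l [w [l0 Dw ->]]]; exists (t * l), w; split => //.
    exact: mulr_ge0.
  by rewrite scalerA.
have CD : forall c1 c2, C c1 -> C c2 -> C (c1 + c2).
  move=> c1 c2 [l1 [w1 [l10 Dw1 ->]]] [l2 [w2 [l20 Dw2 ->]]].
  have [L0|Lp] := eqVneq (l1 + l2) 0.
    have e1 : l1 = 0 by lra.
    have e2 : l2 = 0 by lra.
    by rewrite e1 e2 !scale0r addr0.
  have Lgt : 0 < l1 + l2 by rewrite lt_neqAle eq_sym Lp /=; exact: addr_ge0.
  exists (l1 + l2), ((l1 / (l1 + l2)) *: w1 + (1 - l1 / (l1 + l2)) *: w2); split.
  - exact: addr_ge0.
  - apply: Dconv => //; apply/andP; split; first by apply: divr_ge0 => //; exact: ltW.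
    by rewrite ler_pdivrMr // mul1r lerDl.
  - have -> : 1 - l1 / (l1 + l2) = l2 / (l1 + l2) by field.
    by rewrite scalerDr !scalerA !mulrA !(mulrC (l1 + l2)) -!mulrA divff // !mulr1.
pose p := gaugeC C.
have pD : forall x y, p (x + y) <= p x + p y by move=> x y; exact: gaugeD.
have pZ : forall t x, 0 < t -> p (t *: x) = t * p x by move=> t x t0; exact: gaugeZ.
pose z := a - b0.
have z0 : z != 0 by rewrite subr_eq0; apply/eqP => ab; apply: nBa; rewrite ab.
have [F [Flin Fp Fz]] := HB_exists pD pZ z0.
have hS : subsp [set: X] by split.
have FD : forall x y, F (x + y) = F x + F y by move=> x y; exact: linonD hS Flin I I.
have FZ : forall k x, F (k *: x) = k * F x by move=> k x; exact: linonZ hS Flin I.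
have FN : forall x, F (- x) = - F x by move=> x; rewrite -scaleN1r FZ mulN1r.
have Fb : forall x, `|F x| <= `|x|.
  move=> x; have h1 := Fp x; have h2 := gauge_le x C0; rewrite subr0 in h2.
  have h3 := Fp (- x); have h4 := gauge_le (- x) C0; rewrite subr0 normrN FN in h4 h3.
  rewrite ler_norml; apply/andP; split.
    by have : p x <= `|x| by []; lra.
  by have : p x <= `|x| by []; lra.
exists F; split; first exact: is_dual_lin.
have pzr : r <= p z.
  apply: lb_le_inf; first exact: gauge_ne.
  move=> _ [c [l [w [l0 Dw ->]]] <-].
  pose s := (1 + l)^-1.
  have l1 : 0 < 1 + l by lra.
  have Ds : D (s *: (b0 - a) + (1 - s) *: w).
    apply: Dconv => //; apply/andP; split; first by rewrite invr_ge0 ltW.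
    by rewrite invf_le1 // lerDl.
  have := Dnorm _ Ds.
  have -> : s *: (b0 - a) + (1 - s) *: w = s *: (- (z - l *: w)).
    apply/esym; rewrite opprB /z opprB addrC scalerDr scalerA; congr (_ + _).
    by congr (_ *: _); rewrite /s; field; lra.
  rewrite normrZ normrN ger0_norm; last by rewrite invr_ge0 ltW.
  move=> h.
  have : r <= `|z - l *: w| / (1 + l) by rewrite mulrC.
  rewrite ler_pdivlMr // => h2.
  have : 0 <= r * l by apply: mulr_ge0 => //; exact: ltW.
  rewrite mulrDr mulr1 in h2; lra.
have nz0 : 0 < `|z| by rewrite normr_gt0.
exists (r / `|z| * p z).
  by apply: mulr_gt0; [exact: divr_gt0|lra].
move=> b Bb.
pose u := (r / `|z|) *: z.
have ur : `|u| = r.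
  rewrite normrZ ger0_norm; first by rewrite -mulrA mulVf ?gt_eqF // mulr1.
  by apply: divr_ge0; exact: ltW.
have Cw : C (b - a + u) by exists 1, (b - a + u); split => //; [exists b, u; split => //; rewrite ur|rewrite scale1r].
have := Fp (b - a + u); have := gauge_le (b - a + u) Cw; rewrite subrr normr0.
rewrite /u !FD FN FZ Fz => h1 h2.
rewrite /p in h2; lra.
Qed.

Lemma supp_incl (A B : set X) : closed B -> convex_set_ B -> B !=set0 ->
  (forall x', is_dual x' -> supp x' A = supp x' B) -> A `<=` B.
Proof.
move=> cB convB nB eqs a Aa; apply: contrapT => nBa.
have [F [dF [del del0 hb]]] := separation cB convB nB nBa.
have h1 : (supp F B <= (F a - del)%:E)%E.
  by apply: ge_ereal_sup => _ [b Bb <-]; rewrite lee_fin; exact: hb.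
have h2 : ((F a)%:E <= supp F A)%E by apply: ereal_sup_ubound; exists a.
rewrite eqs // in h2; have := le_trans h2 h1; rewrite lee_fin. lra.
Qed.
End Separation.


Section Dual.
Variables (R : realType) (X : normedModType R).

Lemma dual0 (x' : X -> R) : is_dual x' -> x' 0 = 0.
Proof.
move=> [lin _]; have := lin 1 0 0; rewrite scaler0 addr0 mul1r => h. lra.
Qed.

Lemma dualZ (x' : X -> R) k u : is_dual x' -> x' (k *: u) = k * x' u.
Proof. by move=> dx; have [lin _] := dx; rewrite -[k *: u]addr0 lin dual0 // addr0. Qed.

Lemma dual_bound (x' : X -> R) : is_dual x' ->
  exists2 l : R, 0 < l & forall u, `|x' u| <= l * `|u|.
Proof.
move=> dx; have [lin cx] := dx.
have := cx 0; move/cvgrPdist_lt => /(_ 1 ltr01) /nbhs_ballP[del del0 hdel].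
exists (2 / del); first by rewrite divr_gt0.
move=> u; have [->|u0] := eqVneq u 0; first by rewrite dual0 // normr0 normr0 mulr0.
have nu : 0 < `|u| by rewrite normr_gt0.
pose k := del / (2 * `|u|).
have k0 : 0 < k by rewrite divr_gt0 // mulr_gt0.
have : ball (0 : X) del (k *: u).
  rewrite -ball_normE /ball_ /= sub0r normrN normrZ gtr0_norm //.
  have -> : k * `|u| = del / 2 by rewrite /k; field; rewrite gt_eqF.
  by rewrite ltr_pdivrMr // ltr_pMr // ltr1n.
move=> /hdel /=; rewrite dual0 // sub0r normrN dualZ // normrM gtr0_norm // => h.
have : `|x' u| < k^-1 by rewrite -(ltr_pM2l k0) mulfV ?gt_eqF.
have -> : k^-1 = 2 / del * `|u| by rewrite /k; field; rewrite !gt_eqF.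
move=> h2; exact: ltW.
Qed.

Lemma supp_scale (x' : X -> R) (C : set X) k : 0 < k ->
  supp (fun u => k * x' u) C = (k%:E * supp x' C)%E.
Proof.
move=> k0; rewrite /supp -ereal_sup_pZl //; congr ereal_sup.
apply/seteqP; split => [_ [x Cx <-]|_ [_ [x Cx <-] <-]].
  by exists (x' x)%:E; [exists x|].
by exists x.
Qed.

Lemma supp_fin (x' : X -> R) (C : set X) : is_dual x' -> C !=set0 -> bounded_set C ->
  supp x' C \is a fin_num.
Proof.
move=> dx [c Cc] bC; have [l l0 hl] := dual_bound dx.
have [Mb Mb0 hM] := pinfty_ex_gt0 bC.
apply/fin_numPlt/andP; split.
  apply: (@lt_le_trans _ _ (x' c)%:E); first exact: ltNyr.
  by apply: ereal_sup_ubound; exists c.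
apply: (@le_lt_trans _ _ (l * Mb)%:E); last exact: ltry.
apply: ge_ereal_sup => _ [x Cx <-]; rewrite lee_fin.
apply: (le_trans (ler_norm _)); apply: (le_trans (hl x)).
by rewrite ler_pM2l //; exact: hM.
Qed.
End Dual.

Section Meas.
Variables (R : realType) (d : measure_display) (T : measurableType d).

Lemma scalar_int_uniq (nu : set T -> R) (f : T -> R) E r r' :
  measurable E -> measurable_fun E f -> (forall t, 0 <= f t) ->
  scalar_int nu f E r -> scalar_int nu f E r' -> r = r'.
Proof.
move=> mE mf f0 [m1 [m2 [h1 i1 i2 ->]]] [m1' [m2' [h1' i1' i2' ->]]].
have eqm : forall A, measurable A -> A `<=` E ->
    measure_add m1 m2' A = measure_add m1' m2 A.
  move=> A mA _; rewrite !measure_addE.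
  have f1 : (m1 : measure T R) A \is a fin_num := fin_num_measure m1 A mA.
  have f2 : (m2 : measure T R) A \is a fin_num := fin_num_measure m2 A mA.
  have f1' : (m1' : measure T R) A \is a fin_num := fin_num_measure m1' A mA.
  have f2' : (m2' : measure T R) A \is a fin_num := fin_num_measure m2' A mA.
  rewrite -(fineK f1) -(fineK f2) -(fineK f1') -(fineK f2') -!EFinD; congr EFin.
  have := h1 A mA; rewrite h1' // => h. lra.
have mfE : measurable_fun E (EFin \o f : T -> \bar R) by apply/measurable_EFinP.
have g0 : forall x, E x -> (0 <= (EFin \o f) x)%E by move=> x _; rewrite lee_fin.
have := eq_measure_integral (measure_add m1' m2) (f := EFin \o f) eqm.
rewrite !ge0_integral_measure_add //.
rewrite -(fineK (integrable_fin_num mE i1)) -(fineK (integrable_fin_num mE i2)).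
rewrite -(fineK (integrable_fin_num mE i1')) -(fineK (integrable_fin_num mE i2')).
rewrite -!EFinD; move=> hh; have := EFin_inj hh. lra.
Qed.
End Meas.

Unset Implicit Arguments. Set Strict Implicit.
Theorem corollary5p10 (R : realType) (d : measure_display) (T : measurableType d)
  (X : completeNormedModType R) (M N : set T -> set X) (theta : T -> R) :
  dH_multimeasure M -> dH_multimeasure N -> consistent M N ->
  measurable_fun setT theta -> (forall t, 0 <= theta t) ->
  (exists C : R, forall t, `|theta t| <= C) ->
  (forall E, measurable E ->
     BDS_integral_is (fun A => radstrom (N A)) theta E (radstrom (M E))) ->
  BDSm_integrable N theta /\
  (forall Mf, BDSm_integral N theta Mf -> forall E, measurable E -> M E = Mf E).
Proof.
move=> [MM _] [NN _] _ mth th0 _ Hint.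
have K1 : forall x', is_dual x' -> forall E, measurable E ->
    scalar_int (fun A => fine (supp x' (N A))) theta E (fine (supp x' (M E))).
  move=> x' dx E mE.
  have [l l0 hl] := dual_bound dx.
  pose y' := fun u => l^-1 * x' u.
  have y'ball : dual_ball y'.
    split.
      by move=> a u v; have [lin _] := dx; rewrite /y' lin; ring.
    move=> u; rewrite /y' normrM ger0_norm; last by rewrite invr_ge0 ltW.
    by rewrite ler_pdivrMl //; exact: hl.
  pose phi := fun g : (X -> R) -> R => l * g y'.
  have dphi : linfty_dual phi.
    split; first by move=> a g h _ _; rewrite /phi; ring.
    by exists l => g c _ hg; rewrite /phi normrM gtr0_norm // ler_pM2l //; exact: hg.
  have e : forall C : set X, phi (radstrom C) = fine (supp x' C).
    move=> C; rewrite /phi /radstrom.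
    have -> : supp x' C = (l%:E * supp y' C)%E.
      rewrite /y' supp_scale ?invr_gt0 // muleA -EFinM mulfV ?gt_eqF // mul1e //.
    case: (supp y' C) => [s| |] /=; first by [].
      by rewrite mulry gtr0_sg // mul1e mulr0.
    by rewrite mulrNy gtr0_sg // mul1e mulr0.
  have := Hint E mE phi dphi.
  have -> : (fun A => phi (radstrom (N A))) = fun A => fine (supp x' (N A)).
    by apply/funext => A; exact: e.
  by rewrite e.
have mthE : forall E, measurable E -> measurable_fun E theta.
  by move=> E mE; exact: measurable_funS mth.
have fmax : (fun t => Num.max (theta t) 0) = theta.
  by apply/funext => t; rewrite max_l.
have fmin : (fun t => Num.max (- theta t) 0) = fun _ => 0.
  by apply/funext => t; rewrite max_r // oppr_le0.
split.
  exists M; split => // E mE.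
  have [Mne [Mcl [Mbd Mcv]]] := MM E mE.
  split => // x' dx.
  exists (fine (supp x' (M E))), 0; split.
  - by rewrite fmax; exact: K1.
  - pose x'' := fun u => - x' u.
    have dx'' : is_dual x''.
      have [lin cx] := dx; split.
        by move=> a u v; rewrite /x'' lin; ring.
      by move=> u; apply: cvgN; exact: cx.
    have [m1 [m2 [hm i1 i2 _]]] := K1 x'' dx'' E mE.
    exists m1, m2; split.
    + move=> A mA; rewrite -hm //; congr fine; rewrite /supp /oppM /x''.
      congr ereal_sup; apply/seteqP; split => [_ [_ [y Ny <-] <-]|_ [y Ny <-]].
        by exists y => //; rewrite -[- y]scaleN1r dualZ // mulN1r.
      by exists (- y); [exists y|rewrite -[- y]scaleN1r dualZ // mulN1r].
    + by rewrite fmin; exact: integrable0.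
    + by rewrite fmin; exact: integrable0.
    + have hz : forall x, E x -> ((Num.max (- theta x) 0)%:E = 0 :> \bar R).
        by move=> x _; rewrite max_r // oppr_le0.
      by rewrite !integral0_eq //= subrr.
  - by rewrite addr0 fineK //; exact: supp_fin.
move=> Mf [_ hMf] E mE.
have [Mne [Mcl [Mbd Mcv]]] := MM E mE.
have [Fne Fcl Fcv hF] := hMf E mE.
have eqs : forall x', is_dual x' -> supp x' (Mf E) = supp x' (M E).
  move=> x' dx; have [r1 [r2 [s1 s2 ->]]] := hF x' dx.
  have -> : r2 = 0.
    move: s2 => [m1 [m2 [_ _ _ ->]]].
    have hz : forall x, E x -> ((Num.max (- theta x) 0)%:E = 0 :> \bar R).
      by move=> x _; rewrite max_r // oppr_le0.
    by rewrite !integral0_eq //= subrr.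
  rewrite fmax in s1.
  have -> : r1 = fine (supp x' (M E)).
    exact: (scalar_int_uniq mE (mthE E mE) th0 s1 (K1 x' dx E mE)).
  by rewrite addr0 fineK //; exact: supp_fin.
apply/seteqP; split.
  by apply: supp_incl => // x' dx; rewrite eqs.
by apply: supp_incl.
Qed.
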